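(* Let $T$ be a sequence of length $n$ over $\mathbb{A}$ and $I\subseteq\mathbb{A}$ a nonempty finite itemset. For every window length $x$ with $1\le x\le n$, $$\mathrm{co}(T,I,x)=(n-x+1)-\sum_{k=x}^{n}(k-x+1)\,H[k],$$ where $H[k]=\sum_{\emptyset\neq A\subseteq I}(-1)^{|A|+1}N_A(k)$.
   Context: A sequence $T=(T[0],\dots,T[n-1])$ has entries in $\mathbb{A}$. For $1\le x\le n$ and $x-1\le i\le n-1$ the window $\omega(i,x)$ is the contiguous block $(T[i-x+1],\dots,T[i])$. The co-occurrence count $\mathrm{co}(T,I,x)$ is the number of indices $i\in\{x-1,\dots,n-1\}$ such that every element of $I$ occurs in $\omega(i,x)$. For $A\subseteq I$ nonempty, a maximal $A$-gap is a contiguous block $T[s..t]$ with $0\le s\le t\le n-1$ such that $T[j]\notin A$ for all $s\le j\le t$, and ($s=0$ or $T[s-1]\in A$) and ($t=n-1$ or $T[t+1]\in A$); its length is $t-s+1$. $N_A(k)$ denotes the number of maximal $A$-gaps of length $k$ in $T$. *)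

(* Defs.v *)
From mathcomp Require Import all_boot all_order all_algebra.
From mathcomp Require Import finmap.
Set Implicit Arguments. Unset Strict Implicit. Unset Printing Implicit Defensive.
Import GRing.Theory Num.Theory.
Local Open Scope fset_scope.

Section Defs.
Variable Alph : choiceType.

(* window omega(i,x) = (T[i-x+1], ..., T[i]) (used for x-1 <= i <= n-1) *)
Definition window (T : seq Alph) (i x : nat) : seq Alph :=
  take x (drop (i.+1 - x) T).

Definition co (T : seq Alph) (I : {fset Alph}) (x : nat) : nat :=
  count (fun i => all (fun a => a \in window T i x) I)
        (iota x.-1 (size T - x.-1)).

(* T[j] \in A, for an index j < size T (false if out of range) *)
Definition inAt (T : seq Alph) (A : {fset Alph}) (j : nat) : bool :=
  if onth T j is Some a then a \in A else false.

Definition is_max_gap (T : seq Alph) (A : {fset Alph}) (s t : nat) : bool :=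
  [&& s <= t, t < size T,
      all (fun j => ~~ inAt T A j) (iota s (t - s).+1),
      (s == 0) || inAt T A s.-1
    & (t == (size T).-1) || inAt T A t.+1].

Definition N_gap (T : seq Alph) (A : {fset Alph}) (k : nat) : nat :=
  if k is 0 then 0 else
  count (fun s => is_max_gap T A s (s + k).-1) (iota 0 (size T)).

Definition Hcoef (T : seq Alph) (I : {fset Alph}) (k : nat) : int :=
  \sum_(A <- enum_fset (fpowerset I) | A != fset0)
     ((-1) ^+ (#|` A|.+1) * (N_gap T A k)%:Z)%R.
End Defs.

(* Main.v *)
Require Import Defs.
From mathcomp Require Import all_boot all_order all_algebra.
From mathcomp Require Import finmap zify ring.
Import GRing.Theory Num.Theory.


Fixpoint run (c : seq bool) : nat :=
  if c is b :: c' then (if b then 0 else (run c').+1) else 0.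
Fixpoint Fw x (c : seq bool) : nat :=
  if c is b :: c' then (x <= run c) + Fw x c' else 0.
Fixpoint Gr x (p : bool) (c : seq bool) : nat :=
  if c is b :: c' then (if p && ~~ b then (run c).+1 - x else 0) + Gr x b c' else 0.

Lemma core x c : 0 < x -> Gr x true c = Fw x c /\ Gr x false c + ((run c).+1 - x) = Fw x c.
Proof.
move=> x0; elim: c => [|b c [IH1 IH2]] /=; first by split => //; lia.
case: b => /=; first by rewrite IH1; split; lia.
lia.
Qed.

Lemma run_le c : run c <= size c.
Proof. by elim: c => [|[] c IH] //=. Qed.

Lemma run_nth c j : j < run c -> nth false c j = false.
Proof. by elim: c j => [|[] c IH] [|j] //= /IH. Qed.

Lemma run_end c : run c < size c -> nth false c (run c) = true.
Proof. by elim: c => [|[] c IH] //=. Qed.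

Lemma run_spec d k : (k == run d) = [&& k <= size d,
   all (fun j => ~~ nth false d j) (iota 0 k) & (k == size d) || nth false d k].
Proof.
apply/eqP/and3P => [->|[ks /allP al e]].
  split; first exact: run_le.
    by apply/allP => j; rewrite mem_iota /= => /run_nth ->.
  case: ltngtP (run_le d) => // lt _; by rewrite run_end ?orbT.
case: (ltngtP k (run d)) => // lt.
  move: e; rewrite run_nth // orbF => /eqP ek.
  by move: (run_le d); lia.
have : run d < size d by lia.
move/run_end; have := al (run d); rewrite mem_iota /= lt => /(_ isT) /negbTE ->.
done.
Qed.

Lemma allnegb_take x c : x <= size c -> all negb (take x c) = (x <= run c).
Proof.
elim: c x => [|b c IH] [|x] //= xs.
by case: b => //=; rewrite IH.
Qed.

Lemma Fw_count x c : 0 < x ->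
  Fw x c = count (fun p => all negb (take x (drop p c))) (iota 0 ((size c).+1 - x)).
Proof.
move=> x0; elim: c => [|b c IH] /=; first by have -> : 1 - x = 0 by lia.
case: (leqP x (size c).+1) => xs.
  have -> : (size c).+2 - x = ((size c).+1 - x).+1 by lia.
  rewrite [iota _ _]/= [count _ _]/= (@allnegb_take _ (b :: c) xs) IH.
  congr (_ + _); rewrite (iotaDl 1 0) count_map; apply: eq_count => p /=.
  by [].
have -> : (size c).+2 - x = 0 by lia.
rewrite IH; have -> : (size c).+1 - x = 0 by lia.
have := run_le (b :: c); rewrite /= => h.
case: b h => /=; lia.
Qed.

Lemma Gr_sum x p c : Gr x p c = \sum_(0 <= s < size c)
  (if ~~ nth false c s && (if s is s'.+1 then nth false c s' else p)
   then (run (drop s c)).+1 - x else 0).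
Proof.
elim: c p => [|b c IH] p; first by rewrite big_geq.
rewrite /= big_nat_recl // IH /= andbC; congr (_ + _); apply: eq_bigr => -[|s] _ //.
Qed.

Section Conn.
Variable Alph : choiceType.
Variables (T : seq Alph) (A : {fset Alph}).
Let c := [seq a \in A | a <- T].

Lemma inAtE j : inAt T A j = nth false c j.
Proof.
rewrite /inAt /c; elim: T j => [|a s IH] [|j] //=.
Qed.

Lemma gap_char s k : 0 < k -> is_max_gap T A s (s+k).-1 =
  [&& s < size c, ~~ nth false c s, ((s == 0) || nth false c s.-1) & k == run (drop s c)].
Proof.
case: k => // k _.
rewrite /is_max_gap run_spec size_drop addnS /=.
have h1 m : iota m k = map (addn m) (iota 0 k) by rewrite -iotaDl addn0.
rewrite addKn (h1 s.+1) (h1 1) !all_map.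
have -> : all (preim (addn 1) (fun j => ~~ nth false (drop s c) j)) (iota 0 k) =
          all (preim (addn s.+1) (fun j : nat => ~~ inAt T A j)) (iota 0 k).
  by apply: eq_all => j /=; rewrite nth_drop inAtE addnA addn1.
rewrite !inAtE !nth_drop addn0 addnS /c size_map.
set a1 := all _ _; set b0 := nth _ _ s; set b1 := (_ || _); set b2 := nth _ _ _.+1.
have e1 : (s <= s + k) = true by lia.
have e2 : (s + k < size T) = (s < size T) && (k < size T - s) by lia.
rewrite e1 e2.
case h : (s < size T); case h' : (k < size T - s); rewrite ?andbF //=.
have e3 : (s + k == (size T).-1) = (k.+1 == size T - s) by lia.
rewrite e3; case: (s < size T); case: (k < size T - s); case: a1; case: b0; case: b1; case: b2 => //.
Qed.


Lemma gap_sum x : 0 < x ->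
  \sum_(x <= k < (size T).+1) (k - x + 1) * N_gap T A k = Gr x true c.
Proof.
move=> x0; rewrite Gr_sum /c size_map.
have -> : \sum_(x <= k < (size T).+1) (k - x + 1) * N_gap T A k =
  \sum_(x <= k < (size T).+1) \sum_(0 <= s < size T) (k - x + 1) * is_max_gap T A s (s+k).-1.
  rewrite big_seq_cond [RHS]big_seq_cond; apply: eq_bigr => k.
  rewrite andbT mem_index_iota => /andP[xk _].
  case: k xk => [|k] xk; first by lia.
  rewrite /N_gap -sum1_count big_mkcond /= big_distrr /index_iota subn0.
  by apply: eq_bigr => i _ /=; case: ifP => _; rewrite ?muln0 ?muln1.
rewrite exchange_big /=; rewrite big_seq_cond [RHS]big_seq_cond; apply: eq_bigr => s.
rewrite andbT mem_index_iota => /andP[_ sn].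
have -> : \sum_(x <= k < (size T).+1) (k - x + 1) * is_max_gap T A s (s+k).-1 =
  \sum_(x <= k < (size T).+1) (k - x + 1) *
     ([&& s < size c, ~~ nth false c s, ((s == 0) || nth false c s.-1) & k == run (drop s c)] : nat).
  rewrite big_seq_cond [RHS]big_seq_cond; apply: eq_bigr => k.
  rewrite andbT mem_index_iota => /andP[xk _].
  by rewrite gap_char //; lia.
have -> : (s < size c) = true by rewrite /c size_map.
have -> : ((s == 0) || nth false c s.-1) = (if s is s'.+1 then nth false c s' else true).
  by case: s sn.
under eq_bigr => k _ do rewrite /= andbA.
rewrite -/c; case: (~~ nth false c s && _) => /=; last first.
  by rewrite big1 // => k _; rewrite muln0.
have rle : run (drop s c) <= size T.
  by have := run_le (drop s c); rewrite size_drop /c size_map; lia.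
case: (leqP x (run (drop s c))) => xr.
  rewrite (bigD1_seq (run (drop s c))) ?mem_index_iota ?iota_uniq //=; last by lia.
  rewrite eqxx muln1 big1 ?addn0; first by lia.
  by move=> k /negbTE ->; rewrite muln0.
rewrite big_seq big1; first by lia.
move=> k; rewrite mem_index_iota => /andP[xk _].
by case: eqP => [e|]; [lia | rewrite muln0].
Qed.

Lemma co_disj x : 0 < x ->
  count (fun i => all (fun a => a \notin A) (window T i x)) (iota x.-1 (size T - x.-1))
  = Fw x c.
Proof.
move=> x0; rewrite Fw_count // /c size_map.
have -> : size T - x.-1 = (size T).+1 - x by lia.
have h1 m : iota x.-1 m = map (addn x.-1) (iota 0 m) by rewrite -iotaDl addn0.
rewrite h1.
rewrite count_map; apply: eq_count => p /=; rewrite /window.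
have -> : (x.-1 + p).+1 - x = p by lia.
by rewrite -map_drop -map_take all_map.
Qed.
End Conn.

Local Open Scope fset_scope.
Local Open Scope ring_scope.

Section IntPart.
Variable Alph : choiceType.

Lemma PoszS (J : Type) (r : seq J) (F : J -> nat) :
  (\sum_(i <- r) F i)%:Z = \sum_(i <- r) (F i)%:Z.
Proof. by elim: r => [|a r IH]; rewrite ?big_nil ?big_cons // PoszD IH. Qed.

Lemma count_int (J : Type) (r : seq J) (P : pred J) :
  (count P r)%:Z = \sum_(i <- r) (P i : nat)%:Z.
Proof. by elim: r => [|a r IH]; rewrite ?big_nil ?big_cons //= PoszD IH. Qed.

Lemma prod_all (s : seq Alph) (P : pred Alph) :
  \prod_(a <- s) (P a : nat)%:Z = (all P s : nat)%:Z.
Proof.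
elim: s => [|a s IH]; rewrite ?big_nil ?big_cons //= IH.
by case: (P a); case: (all P s).
Qed.

Lemma IE (S : {fset Alph}) (g : Alph -> int) :
  \sum_(B <- fpowerset S) (-1) ^+ #|` B| * \prod_(a <- B) g a = \prod_(a <- S) (1 - g a).
Proof.
elim/fset1U_rect: S => [|x X xX IH].
  by rewrite fpowerset0 big_seq_fset1 !big_seq_fset0 cardfs0 mulr1.
rewrite big_fsetU1 // -IH (big_fsetID _ (fun B : {fset Alph} => x \in B)) /=.
have -> : \sum_(i <- [fset x0 in fpowerset (x |` X) | x \notin x0])
    (-1) ^+ #|` i| * \prod_(a <- i) g a =
    \sum_(i <- fpowerset X) (-1) ^+ #|` i| * \prod_(a <- i) g a.
  apply: eq_fbigl => B; rewrite !inE /= !fpowersetE.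
  apply/andP/idP => [[/fsubsetP sB xB]|/fsubsetP sB].
    apply/fsubsetP => y yB; have := sB y yB; rewrite !inE.
    by case: eqP => [e|] //=; move: xB; rewrite -e yB.
  split; last by apply: contra xX => /sB.
  by apply/fsubsetP => y /sB yX; rewrite !inE yX orbT.
have -> : \sum_(i <- [fset x0 in fpowerset (x |` X) | x \in x0])
    (-1) ^+ #|` i| * \prod_(a <- i) g a =
    \sum_(i <- [fset x |` B | B in fpowerset X]) (-1) ^+ #|` i| * \prod_(a <- i) g a.
  apply: eq_fbigl => B; rewrite !inE /= fpowersetE.
  apply/andP/imfsetP => [[/fsubsetP sB xB]|[B' /= B'X ->]].
    exists (B `\ x); last by rewrite fsetD1K.
    rewrite /= fpowersetE; apply/fsubsetP => y; rewrite !inE => /andP[yx /sB].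
    by rewrite !inE (negbTE yx).
  split; last by rewrite !inE eqxx.
  rewrite fpowersetE in B'X; apply/fsubsetP => y; rewrite !inE.
  by case/orP => [->//|/(fsubsetP B'X) ->]; rewrite orbT.
rewrite (big_imfset _ _ (h := fun B => x |` B)) /=; last first.
  move=> B1 B2 /=; rewrite !fpowersetE => s1 s2 e.
  rewrite -(fsetU1K (a := x) (B := B1)) ?e ?fsetU1K //.
    by apply: contra xX => /(fsubsetP s2).
  by apply: contra xX => /(fsubsetP s1).
rewrite mulrBl mul1r addrC; congr (_ + _).
rewrite mulr_sumr -sumrN big_seq [RHS]big_seq; apply: eq_bigr => B.
rewrite fpowersetE => sB.
have xB : x \notin B by apply: contra xX => /(fsubsetP sB).
rewrite cardfsU1 xB big_fsetU1 // add1n exprS.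
set P := \big[_/_]_(i <- B) g i.
change (-1 * (-1) ^+ #|` B| * (g x * P) = - (g x * ((-1) ^+ #|` B| * P))).
ring.
Qed.

Lemma disj_sym (A : {fset Alph}) (w : seq Alph) :
  all (fun a => a \notin w) A = all (fun a => a \notin A) w.
Proof.
apply/allP/allP => H a aX; apply/negP => aY.
  by have := H a aY; rewrite aX.
by have := H a aY; rewrite aX.
Qed.

Lemma window_IE (I : {fset Alph}) (w : seq Alph) :
  (all (fun a => a \in w) I : nat)%:Z = 1 -
  \sum_(A <- fpowerset I | A != fset0)
     (-1) ^+ (#|` A|.+1) * (all (fun a => a \notin A) w : nat)%:Z.
Proof.
have h := IE I (fun a => (a \notin w : nat)%:Z).
have e1 : \prod_(a <- I) (1 - (a \notin w : nat)%:Z) = (all (fun a => a \in w) I : nat)%:Z.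
  by rewrite -prod_all; apply: eq_bigr => a _; case: (a \in w).
rewrite -e1 -h (bigD1_seq fset0) ?fset_uniq ?fpowersetE ?fsub0set //=.
rewrite big_nil mulr1 -sumrN; congr (_ + _).
apply: eq_bigr => A _; rewrite prod_all disj_sym exprS.
by rewrite mulN1r mulNr opprK.
Qed.
End IntPart.

Lemma sum1_int (J : Type) (r : seq J) : \sum_(i <- r) (1 : int) = (size r)%:Z.
Proof. by elim: r => [|a r IH]; rewrite ?big_nil ?big_cons // IH /= -addn1 PoszD addrC. Qed.

Theorem mainTheorem2 (Alph : choiceType) (T : seq Alph) (I : {fset Alph})
  (x : nat) :
  I != fset0 -> (1 <= x)%N -> (x <= size T)%N ->
  (co T I x)%:Z =
    (size T - x + 1)%:Z
    - \sum_(x <= k < (size T).+1) ((k - x + 1)%:Z * Hcoef T I k).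
Proof.
move=> _ x1 xn.
have HR : \sum_(x <= k < (size T).+1) ((k - x + 1)%:Z * Hcoef T I k) =
  \sum_(A <- fpowerset I | A != fset0)
     (-1) ^+ (#|` A|.+1) * (Fw x [seq a \in A | a <- T])%:Z.
  rewrite /Hcoef; under eq_bigr => k _ do rewrite mulr_sumr.
  rewrite exchange_big /=; apply: eq_bigr => A _.
  rewrite -(core _ _ x1).1 -(@gap_sum _ T A x x1) PoszS mulr_sumr; apply: eq_bigr => k _.
  by rewrite PoszM mulrCA.
rewrite HR /co count_int.
under eq_bigr => i _ do rewrite window_IE.
rewrite sumrB sum1_int size_iota.
congr (_ - _); first by congr Posz; lia.
rewrite exchange_big /=; apply: eq_bigr => A _.
by rewrite -mulr_sumr -count_int (@co_disj _ T A x x1).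
Qed.
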